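(* Let $w$ be a positive integer constant. There exists a constant $h>0$ such that if $p>0$ is a function of $n$ and $f$ is a $w$-DNF on $\{0,1\}^{L_{d'}}$, then $f\circ\Phi_{d'}$ can be represented as a decision tree of height at most $h\ln(p)$ with probability $1-O(1/p)$.
   Context: Fix $k\ge2$ and $0\le\theta<1$; $n=k^d$ with $d'\le d$. $L_r$ is the set of depth-$r$ vertices of the complete $k$-ary tree, $\mathrm{parent}(v)$ the parent of $v$. $R_\theta$ is the distribution on $\{0,1,*\}$ giving $0$ and $1$ each probability $(1-\theta)/2$ and $*$ probability $\theta$. $\Phi_{d'}:\{0,1\}^{L_{d'-1}}\to\{0,1\}^{L_{d'}}$ is the random map defined by drawing $r\in\{0,1,*\}^{L_{d'}}$ with i.i.d. $R_\theta$ coordinates and setting $(\Phi_{d'}(x))_v=r_v$ if $r_v\in\{0,1\}$, and $x_{\mathrm{parent}(v)}$ if $r_v=*$. A $w$-DNF is an OR of ANDs of at most $w$ literals. *)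

(* Defs.v *)
From HB Require Import structures.
From mathcomp Require Import all_boot all_order all_algebra.
From mathcomp Require Import all_classical all_reals all_analysis.
Set Implicit Arguments. Unset Strict Implicit. Unset Printing Implicit Defensive.
Import Order.TTheory GRing.Theory Num.Theory.
Local Open Scope ring_scope.

(* Vertices of depth r of the complete k-ary tree: 'I_(k^r).
   The children of u are u*k + j (j < k), so parent v = v %/ k. *)
Definition L (k r : nat) : finType := 'I_(k ^ r).

Lemma parent_lt (k r : nat) (v : 'I_(k ^ r)) : (v %/ k < k ^ r.-1)%N.
Proof.
case: v => v /=; case: r => [|r] /=.
  by rewrite expn0 ltnS leqn0 => /eqP ->; rewrite div0n.
case: k => [|k]; first by rewrite exp0n.
by move=> Hv; rewrite ltn_divLR // -expnSr.
Qed.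

Definition parent (k r : nat) (v : L k r) : L k r.-1 :=
  Ordinal (parent_lt v).

(* A random string r in {0,1,*}^{L_{d'}}: None encodes *, Some b encodes b. *)
Definition Phi (k d' : nat) (r : {ffun L k d' -> option bool})
  (x : {ffun L k d'.-1 -> bool}) : {ffun L k d' -> bool} :=
  [ffun v => if r v is Some b then b else x (parent v)].

Definition weight (R : realType) (theta : R) (k d' : nat)
  (r : {ffun L k d' -> option bool}) : R :=
  \prod_(v : L k d') (if r v is Some _ then (1 - theta) / 2 else theta).

Definition prob (R : realType) (theta : R) (k d' : nat)
  (E : {ffun L k d' -> option bool} -> Prop) : R :=
  \sum_(r : {ffun L k d' -> option bool} | `[< E r >]) weight theta r.

(* DNFs: a list of terms, each a list of literals (variable, required value). *)
Definition DNF (V : Type) := seq (seq (V * bool)).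

Definition evalDNF (V : eqType) (f : DNF V) (x : V -> bool) : bool :=
  has (fun t => all (fun l => x l.1 == l.2) t) f.

Definition is_wDNF (V : Type) (w : nat) (f : DNF V) : bool :=
  all (fun t => (size t <= w)%N) f.

(* Decision trees: Node v t0 t1 queries x v, goes to t0 if false, t1 if true. *)
Inductive DT (V : Type) : Type :=
| Leaf of bool
| Node of V & DT V & DT V.

Fixpoint evalDT (V : Type) (T : DT V) (x : V -> bool) : bool :=
  match T with
  | Leaf b => b
  | Node v t0 t1 => if x v then evalDT t1 x else evalDT t0 x
  end.

Fixpoint height (V : Type) (T : DT V) : nat :=
  match T with
  | Leaf _ => 0
  | Node _ t0 t1 => (maxn (height t0) (height t1)).+1
  end.

(* Main.v *)
Require Import Defs.
From HB Require Import structures.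
From mathcomp Require Import all_boot all_order all_algebra.
From mathcomp Require Import all_classical all_reals all_analysis.
From mathcomp Require Import ring lra.
Import Order.TTheory GRing.Theory Num.Theory.
Local Open Scope ring_scope.
Set Implicit Arguments. Unset Strict Implicit. Unset Printing Implicit Defensive.
Section Prob.
Variable (R : realType) (theta : R).
Hypothesis th0 : 0 <= theta.
Hypothesis th1 : theta < 1.

Definition wt (o : option bool) : R := if o is Some _ then (1 - theta)/2 else theta.

Lemma wt_ge0 o : 0 <= wt o.
Proof. case: o => [b|] //=; apply: divr_ge0 => //; rewrite subr_ge0; exact: ltW. Qed.

Lemma sum_wt : \sum_(o : option bool) wt o = 1.
Proof.
rewrite (bigD1 None) //= (bigD1 (Some true)) //= (bigD1 (Some false)) //=.
rewrite big1; last by case=> [[]|].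
by field.
Qed.

Variable V : finType.
Local Notation rT := {ffun V -> option bool}.
Definition wgt (r : {ffun V -> option bool}) : R := \prod_v wt (r v).
Definition pr (E : {ffun V -> option bool} -> Prop) : R :=
  \sum_(r | `[< E r >]) wgt r.

Lemma wgt_ge0 r : 0 <= wgt r.
Proof. by apply: prodr_ge0 => v _; apply: wt_ge0. Qed.

Lemma sum_wgt : \sum_r wgt r = 1.
Proof.
rewrite /wgt -(bigA_distr_bigA (fun (v : V) o => wt o)).
by rewrite big1 // => v _; apply: sum_wt.
Qed.

Lemma prE E : pr E = \sum_r (if `[< E r >] then wgt r else 0).
Proof. by rewrite /pr big_mkcond. Qed.

Lemma pr_ge0 E : 0 <= pr E.
Proof. by apply: sumr_ge0 => r _; apply: wgt_ge0. Qed.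

Lemma pr_le1 E : pr E <= 1.
Proof.
rewrite -sum_wgt prE; apply: ler_sum => r _; case: ifP => _ //; exact: wgt_ge0.
Qed.

Lemma prC E : pr (fun r => ~ E r) = 1 - pr E.
Proof.
rewrite -sum_wgt (bigID (fun r => `[< E r >])) /= addrC addrK /pr.
by apply: eq_bigl => r; rewrite asbool_neg.
Qed.

Lemma pr_mono (E F : {ffun V -> option bool} -> Prop) :
  (forall r, E r -> F r) -> pr E <= pr F.
Proof.
move=> EF; rewrite !prE; apply: ler_sum => r _.
case: (asboolP (E r)) => He; first by rewrite asboolT //; apply: EF.
case: ifP => _ //; exact: wgt_ge0.
Qed.

Lemma pr_ext (E F : {ffun V -> option bool} -> Prop) :
  (forall r, E r <-> F r) -> pr E = pr F.
Proof. by move=> EF; apply/eqP; rewrite eq_le !pr_mono // => r /EF. Qed.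

Section Merge.
Variable B : {set V}.
Definition mrg (a r : {ffun V -> option bool}) : {ffun V -> option bool} :=
  [ffun v => if v \in B then a v else r v].

Lemma wgt_swap a r : wgt (mrg a r) * wgt (mrg r a) = wgt a * wgt r.
Proof.
rewrite /wgt -!big_split /=; apply: eq_bigr => v _; rewrite !ffunE.
by case: (v \in B) => //; rewrite mulrC.
Qed.

Lemma mrgK a r : mrg (mrg a r) (mrg r a) = a.
Proof. by apply/ffunP => v; rewrite !ffunE; case: (v \in B). Qed.

Lemma merge_sum (H : {ffun V -> option bool} -> R) :
  \sum_a \sum_r wgt a * wgt r * H (mrg a r) = \sum_t wgt t * H t.
Proof.
transitivity (\sum_t \sum_s wgt t * wgt s * H t); last first.
  apply: eq_bigr => t _.
  rewrite (eq_bigr (fun s => wgt s * (wgt t * H t))); last by move=> s _; ring.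
  by rewrite -big_distrl /= sum_wgt mul1r.
symmetry; rewrite !pair_big /=.
have inj : injective (fun p : {ffun V -> option bool} * {ffun V -> option bool} =>
   (mrg p.1 p.2, mrg p.2 p.1)).
  apply: (can_inj (g := fun p : {ffun V -> option bool} * {ffun V -> option bool} =>
   (mrg p.1 p.2, mrg p.2 p.1))) => [[a r]] /=; by rewrite !mrgK.
rewrite (reindex_inj inj) /=; apply: eq_bigr => [[a r]] _ /=.
by rewrite wgt_swap.
Qed.

Lemma cond_sum (G : {ffun V -> option bool} -> {ffun V -> option bool} -> R) :
 (forall (a a' r : rT), (forall v, v \in B -> a v = a' v) -> G a r = G a' r) ->
 (forall (a r r' : rT), (forall v, v \notin B -> r v = r' v) -> G a r = G a r') ->
 \sum_t wgt t * G t t = \sum_a \sum_r wgt a * wgt r * G a r.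
Proof.
move=> G1 G2; rewrite -(merge_sum (fun t => G t t)).
apply: eq_bigr => a _; apply: eq_bigr => r _; congr (_ * _).
rewrite (G1 a (mrg a r) r); last by move=> v vB; rewrite ffunE vB.
by apply: G2 => v vB; rewrite ffunE (negbTE vB).
Qed.

Lemma asbool_iff (P Q : Prop) : (P <-> Q) -> `[< P >] = `[< Q >].
Proof. by move=> PQ; case: asboolP; case: asboolP; tauto. Qed.

Lemma cond_pr (A : {ffun V -> option bool} -> {ffun V -> option bool} -> Prop) :
 (forall (a a' r : rT), (forall v, v \in B -> a v = a' v) -> (A a r <-> A a' r)) ->
 (forall (a r r' : rT), (forall v, v \notin B -> r v = r' v) -> (A a r <-> A a r')) ->
 pr (fun r => A r r) = \sum_a wgt a * pr (A a).
Proof.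
move=> A1 A2.
have -> : pr (fun r => A r r) = \sum_t wgt t * (if `[< A t t >] then 1 else 0).
  by rewrite prE; apply: eq_bigr => t _; case: ifP; rewrite ?mulr1 ?mulr0.
rewrite (cond_sum (G := fun a r => if `[< A a r >] then 1 else 0)).
- apply: eq_bigr => a _; rewrite prE big_distrr /=; apply: eq_bigr => r _.
  by case: ifP; rewrite ?mulr1 ?mulr0.
- by move=> a a' r H; rewrite (asbool_iff (A1 a a' r H)).
- by move=> a r r' H; rewrite (asbool_iff (A2 a r r' H)).
Qed.

Lemma cond_lb (A : {ffun V -> option bool} -> {ffun V -> option bool} -> Prop) (e : R) :
 (forall (a a' r : rT), (forall v, v \in B -> a v = a' v) -> (A a r <-> A a' r)) ->
 (forall (a r r' : rT), (forall v, v \notin B -> r v = r' v) -> (A a r <-> A a r')) ->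
 (forall a, e <= pr (A a)) -> e <= pr (fun r => A r r).
Proof.
move=> A1 A2 He; rewrite (cond_pr A1 A2).
rewrite -[e]mul1r -sum_wgt big_distrl /=; apply: ler_sum => a _.
by apply: ler_wpM2l; [apply: wgt_ge0 | apply: He].
Qed.

Lemma cond_prod (P Q : {ffun V -> option bool} -> Prop) :
 (forall (a a' : rT), (forall v, v \in B -> a v = a' v) -> (P a <-> P a')) ->
 (forall (r r' : rT), (forall v, v \notin B -> r v = r' v) -> (Q r <-> Q r')) ->
 pr (fun r => P r /\ Q r) = pr P * pr Q.
Proof.
move=> P1 Q1.
rewrite (cond_pr (A := fun a r => P a /\ Q r)).
- rewrite prE big_distrl /=; apply: eq_bigr => a _.
  case: (asboolP (P a)) => Pa.
    by congr (_ * _); apply: pr_ext => r; tauto.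
  rewrite mul0r (_ : pr _ = 0) ?mulr0 // /pr big_pred0 // => r.
  by apply/asboolP; tauto.
- by move=> a a' r H; move: (P1 a a' H); tauto.
- by move=> a r r' H; move: (Q1 r r' H); tauto.
Qed.
End Merge.
Lemma pr_fix (S : {set V}) (c : V -> option bool) :
  pr (fun r : rT => forall v, v \in S -> r v = c v) = \prod_(v in S) wt (c v).
Proof.
pose F v o := if v \in S then (if o == c v then wt o else 0) else wt o.
rewrite prE.
transitivity (\sum_(r : rT) \prod_v F v (r v)).
  apply: eq_bigr => r _; case: asboolP => H.
    by apply: eq_bigr => v _; rewrite /F; case: ifP => // vS; rewrite H ?eqxx.
  have [v vS nv] : exists2 v, v \in S & r v != c v.
    case: (boolP [exists v in S, r v != c v]) => [/exists_inP // | /exists_inPn Hn].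
    by exfalso; apply: H => v vS; apply/eqP/negPn; apply: Hn.
  by rewrite (bigD1 v) //= /F vS (negbTE nv) mul0r.
rewrite -(bigA_distr_bigA F) [RHS]big_mkcond /=; apply: eq_bigr => v _.
rewrite /F; case: ifP => vS; last by apply: sum_wt.
by rewrite -big_mkcond big_pred1_eq.
Qed.

Variable U : finType.
Variable par : V -> U.

Definition phi (r : rT) (x : U -> bool) : V -> bool :=
  fun v => if r v is Some b then b else x (par v).

Definition consistent (t : seq (V * bool)) :=
  all (fun l => all (fun l' : V * bool => (l.1 == l'.1) ==> (l.2 == l'.2)) t) t.

Lemma sat_consistent (y : V -> bool) t :
  all (fun l => y l.1 == l.2) t -> consistent t.
Proof.
move=> /allP H; apply/allP => l lt; apply/allP => l' l't; apply/implyP => /eqP e.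
by move: (H l lt) (H l' l't); rewrite e => /eqP -> /eqP ->.
Qed.

Lemma eval_clean (f : DNF V) y :
  evalDNF [seq t <- f | consistent t] y = evalDNF f y.
Proof.
rewrite /evalDNF; elim: f => //= t f IH; case: ifP => c /=; rewrite IH //.
by case H: (all _ t) => //; rewrite (sat_consistent H) in c.
Qed.

Definition sat (r : rT) (t : seq (V * bool)) := all (fun l => r l.1 == Some l.2) t.

Lemma sat_eval r t x : sat r t -> all (fun l => phi r x l.1 == l.2) t.
Proof. by move=> /allP H; apply/allP => l /H /eqP; rewrite /phi => ->. Qed.

Definition req (t : seq (V * bool)) v := has (fun l => (l.1 == v) && l.2) t.

Lemma req_ok t l : consistent t -> l \in t -> req t l.1 = l.2.
Proof.
move=> /allP c lt; case: l lt => v b lt /=; case: b lt => lt.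
  by apply/hasP; exists (v, true) => //=; rewrite eqxx.
apply/hasP => -[[v' []] l't /= /andP[/eqP e _] //]; subst v'.
by move: (c _ lt) => /allP /(_ _ l't) /=; rewrite eqxx.
Qed.

Definition St (t : seq (V * bool)) : {set V} := [set v | v \in map fst t].

Lemma pr_sat t : consistent t ->
  pr (fun r => sat r t) = ((1 - theta) / 2) ^+ #|St t|.
Proof.
move=> c; rewrite -prodr_const.
rewrite -(pr_fix (St t) (fun v => Some (req t v))).
apply: pr_ext => r; split.
  move=> /allP H v; rewrite inE => /mapP [l lt ->].
  by rewrite (req_ok c lt); apply/eqP; apply: H.
move=> H; apply/allP => l lt; rewrite H ?(req_ok c lt) //.
by rewrite inE; apply/mapP; exists l.
Qed.

Lemma pr_sat_lb t w : consistent t -> (size t <= w)%N ->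
  ((1 - theta) / 2) ^+ w <= pr (fun r => sat r t).
Proof.
move=> c sw; rewrite pr_sat //; apply: ler_wiXn2l.
- by apply: divr_ge0 => //; rewrite subr_ge0 ltW.
- rewrite ler_pdivrMr // mul1r; have := th0; lra.
- apply: leq_trans sw; rewrite /St cardsE; apply: leq_trans (card_size _) _.
  by rewrite size_map.
Qed.
Definition pars (t : seq (V * bool)) : seq U := map (fun l => par l.1) t.
Definition parsM (M : DNF V) : seq U := flatten (map pars M).

Fixpoint greedy (f : DNF V) : DNF V :=
  if f is t :: f' then
    (let M := greedy f' in if has (fun u => u \in parsM M) (pars t) then M else t :: M)
  else [::].

Lemma greedy_cover f t : t \in f ->
  (t == [::]) || has (fun l => par l.1 \in parsM (greedy f)) t.
Proof.
elim: f t => //= t0 f IH t; rewrite inE => /orP [/eqP -> | tf].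
  case: ifP => H.
    by move: H; rewrite has_map => ->; rewrite orbT.
  case: t0 {H} => [|l t'] //; apply/orP; right.
  by apply/hasP; exists l; [exact: mem_head | rewrite /parsM /= mem_head].
case: ifP => H; first exact: (IH t tf).
move: (IH t tf) => /orP [->|] //; move=> Hh; apply/orP; right.
by apply: sub_has Hh => l /=; rewrite /parsM /= mem_cat => ->; rewrite orbT.
Qed.

Lemma greedy_sub f t : t \in greedy f -> t \in f.
Proof.
elim: f t => //= t0 f IH t; case: ifP => _; first by move/IH; rewrite inE => ->; rewrite orbT.
by rewrite !inE => /orP [->//| /IH ->]; rewrite orbT.
Qed.

Lemma size_parsM (M : DNF V) w : all (fun t => size t <= w)%N M ->
  (size (parsM M) <= w * size M)%N.
Proof.
elim: M => //= t M IH /andP [st sM].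
rewrite /parsM /= size_cat size_map mulnS leq_add //; exact: IH.
Qed.

Lemma greedy_none f w : all consistent f -> all (fun t => size t <= w)%N f ->
  pr (fun r => forall t, t \in greedy f -> ~~ sat r t) <=
  (1 - ((1 - theta) / 2) ^+ w) ^+ size (greedy f).
Proof.
elim: f => [|t f IH] /=.
  by move=> _ _; rewrite expr0; apply: pr_le1.
move=> /andP [ct cf] /andP [st sf].
case: ifP => H; first exact: IH.
set M := greedy f.
have -> : pr (fun r => forall t0, t0 \in t :: M -> ~~ sat r t0) =
          pr (fun r => ~~ sat r t /\ (forall t0, t0 \in M -> ~~ sat r t0)).
  apply: pr_ext => r; split.
    by move=> Hr; split => [|t0 t0M]; apply: Hr; rewrite inE ?eqxx ?t0M ?orbT.
  by move=> [H1 H2] t0; rewrite inE => /orP [/eqP -> //|]; apply: H2.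
rewrite (cond_prod (B := St t)).
- rewrite exprS; apply: ler_pM.
  + exact: pr_ge0.
  + exact: pr_ge0.
  + rewrite (pr_ext (F := fun r => ~ sat r t)); last by move=> r; split => /negP.
    rewrite prC lerD2l lerN2; exact: pr_sat_lb.
  + exact: IH.
- move=> a a' Ha; suff -> : sat a t = sat a' t by [].
  apply: eq_in_all => l lt; rewrite Ha //.
  by rewrite inE; apply/mapP; exists l.
- move=> r r' Hr; suff E : forall t0, t0 \in M -> sat r t0 = sat r' t0.
    by split => Hh t0 t0M; [rewrite -E // | rewrite E //]; apply: Hh.
  move=> t0 t0M; apply: eq_in_all => l lt0; rewrite Hr //.
  apply/negP; rewrite inE => /mapP [l' l't el].
  move/negP: H; apply; apply/hasP; exists (par l.1).
    by rewrite /pars el; apply/mapP; exists l'.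
  by apply/flattenP; exists (pars t0); [apply/mapP; exists t0|apply/mapP; exists l].
Qed.

Definition val (a : rT) (S : {set U}) v := if a v is Some c then c else (par v \in S).

Definition restr (us : seq U) (f : DNF V) (a : rT) (S : {set U}) : DNF V :=
  [seq [seq l <- t | par l.1 \notin us] |
     t <- f & all (fun l => (par l.1 \in us) ==> (val a S l.1 == l.2)) t].

Definition ow (us : seq U) (rho x : U -> bool) : U -> bool :=
  fun u => if u \in us then rho u else x u.

Lemma restr_term us (r : rT) rho x t :
  let S := [set u | (u \in us) && rho u] in
  all (fun l => phi r (ow us rho x) l.1 == l.2) t =
  all (fun l => (par l.1 \in us) ==> (val r S l.1 == l.2)) t &&
  all (fun l => phi r x l.1 == l.2) [seq l <- t | par l.1 \notin us].
Proof.
move=> S; elim: t => //= l t ->; case: (boolP (par l.1 \in us)) => Hu /=.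
  have -> : phi r (ow us rho x) l.1 = val r S l.1.
    by rewrite /phi /val /ow Hu /S inE Hu.
  by rewrite andbA.
have -> : phi r (ow us rho x) l.1 = phi r x l.1.
  by rewrite /phi /ow (negbTE Hu).
by rewrite andbCA.
Qed.

Lemma restr_eval us (f : DNF V) (r : rT) rho x :
  evalDNF f (phi r (ow us rho x)) =
  evalDNF (restr us f r [set u | (u \in us) && rho u]) (phi r x).
Proof.
rewrite /evalDNF /restr; elim: f => //= t f IH.
rewrite restr_term IH; case: ifP => //= _.
Qed.

Lemma restr_w us (f : DNF V) w a S :
  (forall t, t \in f -> (t == [::]) || has (fun l => par l.1 \in us) t) ->
  is_wDNF w.+1 f -> is_wDNF w (restr us f a S).
Proof.
move=> Hc /allP Hw; apply/allP => t' /mapP [t]; rewrite mem_filter => /andP [_ tf] ->.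
rewrite size_filter.
move: (Hc t tf) (Hw t tf) => /orP [/eqP -> //|]; rewrite has_count => H1 H2.
have := count_predC (fun l : V * bool => par l.1 \in us) t.
rewrite (@eq_count _ (predC _) (fun l : V * bool => par l.1 \notin us)) //.
move=> E; rewrite -ltnS; apply: leq_trans H2; rewrite -E.
by rewrite -addn1 addnC leq_add2r.
Qed.

Lemma restr_dep_a us (f : DNF V) (a a' : rT) S :
  (forall v, v \in [set v | par v \in us] -> a v = a' v) ->
  restr us f a S = restr us f a' S.
Proof.
move=> H; rewrite /restr; congr map; apply: eq_filter => t; apply: eq_all => l.
case: (boolP (par l.1 \in us)) => //= Hu.
by rewrite /val H // inE.
Qed.

Lemma restr_dep_r us (f : DNF V) a S (r r' : rT) x :
  (forall v, v \notin [set v | par v \in us] -> r v = r' v) ->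
  evalDNF (restr us f a S) (phi r x) = evalDNF (restr us f a S) (phi r' x).
Proof.
move=> H; rewrite /evalDNF; apply: eq_in_has => t' /mapP [t _ ->].
apply: eq_in_all => l; rewrite mem_filter => /andP [Hl _].
by rewrite /phi H // inE.
Qed.

Definition upd (x : U -> bool) u b : U -> bool := fun v => if v == u then b else x v.

Lemma dt_list (us : seq U) (g : (U -> bool) -> bool) (H : R) :
 (forall rho : U -> bool, exists T : DT U, (height T)%:R <= H /\
     forall x, evalDT T x = g (ow us rho x)) ->
 exists T : DT U, (height T)%:R <= (size us)%:R + H /\ forall x, evalDT T x = g x.
Proof.
elim: us g => [|u us IH] g Hg.
  have [T [hT eT]] := Hg (fun _ => false).
  exists T; split; first by rewrite add0r.
  by move=> x; rewrite eT; congr g; apply: funext => v; rewrite /ow in_nil.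
have Hb : forall b, exists T : DT U, (height T)%:R <= (size us)%:R + H /\
    forall x, evalDT T x = g (upd x u b).
  move=> b; apply: (IH (fun x => g (upd x u b))) => rho.
  have [T [hT eT]] := Hg (upd rho u b).
  exists T; split => // x; rewrite eT; congr g; apply: funext => v.
  by rewrite /ow /upd in_cons; case: (v == u).
have [T0 [h0 e0]] := Hb false.
have [T1 [h1 e1]] := Hb true.
exists (Node u T0 T1); split.
  rewrite /= -natr1 /=.
  case: (leqP (height T0) (height T1)) => hh.
    rewrite -natr1; lra.
  rewrite -natr1; lra.
move=> x /=; case E: (x u); rewrite ?e0 ?e1; congr g; apply: funext => v;
  rewrite /upd; case: eqP => // ->; by rewrite E.
Qed.

Lemma union_lb (I : finType) (P : {pred I}) (E : I -> rT -> Prop) (e : R) :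
  (forall i, i \in P -> 1 - e <= pr (E i)) ->
  1 - #|P|%:R * e <= pr (fun r => forall i, i \in P -> E i r).
Proof.
move=> He.
have H1 : 1 - pr (fun r => forall i, i \in P -> E i r) <=
          \sum_(i in P) pr (fun r => ~ E i r).
  rewrite -prC prE.
  rewrite (eq_bigr (fun i => \sum_r (if `[< ~ E i r >] then wgt r else 0)));
    last by move=> i _; rewrite prE.
  rewrite exchange_big /=; apply: ler_sum => r _.
  case: asboolP => H; last first.
    by apply: sumr_ge0 => i _; case: ifP => _ //; exact: wgt_ge0.
  have [i Pi nE] : exists2 i, i \in P & ~ E i r.
    apply: contrapT => Hn; apply: H => i Pi; apply: contrapT => nE; apply: Hn.
    by exists i.
  rewrite (bigD1 i) //= asboolT // lerDl; apply: sumr_ge0 => j _.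
  by case: ifP => _ //; exact: wgt_ge0.
have H2 : \sum_(i in P) pr (fun r => ~ E i r) <= #|P|%:R * e.
  rewrite mulr_natl -sumr_const; apply: ler_sum => i Pi; rewrite prC.
  have := He i Pi; lra.
lra.
Qed.

Lemma pr_true : pr (fun _ => True) = 1.
Proof. by rewrite prE -sum_wgt; apply: eq_bigr => r _; rewrite asboolT. Qed.

End Prob.
Section Main.
Variable (R : realType) (theta : R).
Hypothesis th0 : 0 <= theta.
Hypothesis th1 : theta < 1.

Definition good (w : nat) (h C : R) :=
  forall (V U : finType) (par : V -> U) (f : DNF V), is_wDNF w f ->
  forall p : R, 0 < p ->
  1 - C / p <= pr theta (fun r : {ffun V -> option bool} =>
     exists T : DT U, (height T)%:R <= h * ln p /\
       forall x : U -> bool, evalDT T x = evalDNF f (phi par r x)).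

Lemma small_p (V : finType) (E : {ffun V -> option bool} -> Prop) C p :
  0 < p -> p <= C -> 1 - C / p <= pr theta E.
Proof.
move=> pp pC; apply: le_trans (pr_ge0 th0 th1 E).
rewrite subr_le0 ler_pdivlMr // mul1r //.
Qed.

Lemma eval0 (V : eqType) (f : DNF V) y : is_wDNF 0 f -> evalDNF f y = (f != [::]).
Proof.
elim: f => //= t f IH /andP [st sf]; move: st; rewrite leqn0 => /nilP -> //.
Qed.

Lemma good0 : good 0 1 1.
Proof.
move=> V U par f fw p pp.
case: (lerP p 1) => p1; first exact: small_p.
apply: le_trans (_ : pr theta (fun _ => True) <= _).
  rewrite pr_true lerBlDr lerDl; apply: divr_ge0 => //; exact: ltW.
apply: pr_mono => // r _; exists (Leaf U (f != [::])); split.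
  by rewrite /= mul1r; apply: ln_ge0; apply: ltW.
by move=> x /=; rewrite eval0.
Qed.

Lemma good_step w h' C' : 0 < h' -> 1 <= C' -> good w h' C' ->
  exists h, 0 < h /\ good w.+1 h C'.
Proof.
move=> hp Cp IH.
have t0 := th0; have t1 := th1.
set b := (1 - theta) / 2.
have b0 : 0 < b by apply: divr_gt0 => //; rewrite subr_gt0.
have b1 : b < 1 by rewrite /b ltr_pdivrMr // mul1r; lra.
set q := b ^+ w.+1.
have q0 : 0 < q by apply: exprn_gt0.
have q1 : q < 1 by apply: (le_lt_trans (ler_iXnr (ltn0Sn w) (ltW b0) (ltW b1)) b1).
set lam := - ln (1 - q).
have lam0 : 0 < lam by rewrite oppr_gt0; apply: ln_lt0; apply/andP; split; lra.
set W := (w.+1)%:R : R.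
have W0 : 0 < W by rewrite ltr0n.
set L2 := ln (2 : R).
have L20 : 0 <= L2 by apply: ln_ge0; rewrite ler1n.
set h := W / lam + h' * (1 + W * L2 / lam).
have h0 : 0 < h.
  have : 0 < W / lam by apply: divr_gt0.
  have : 0 <= h' * (1 + W * L2 / lam).
    apply: mulr_ge0; first exact: ltW.
    apply: addr_ge0 => //; apply: divr_ge0; [apply: mulr_ge0 => //; exact: ltW| exact: ltW].
  rewrite /h; lra.
exists h; split => //.
move=> V U par f fw p pp.
case: (lerP p 1) => p1; first by apply: small_p => //; lra.
have lnp : 0 < ln p by apply: ln_gt0.
set f0 := [seq t <- f | consistent t].
have c0 : all (@consistent V) f0 by apply: filter_all.
have s0 : all (fun t => size t <= w.+1)%N f0.
  by rewrite all_filter; apply/allP => t tf; apply/implyP => _; apply: (allP fw).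
have fw0 : is_wDNF w.+1 f0 := s0.
apply: le_trans (_ : pr theta (fun r => exists T : DT U, (height T)%:R <= h * ln p /\
   forall x, evalDT T x = evalDNF f0 (phi par r x)) <= _); last first.
  apply: pr_mono => // r [T [hT eT]]; exists T; split => // x.
  by rewrite eT eval_clean.
set M := greedy par f0.
set m := size M.
case: (lerP ((1 - q) ^+ m) p^-1) => Hm.
- apply: le_trans (_ : 1 - (1 - q) ^+ m <= _).
    rewrite lerD2l lerN2; apply: le_trans Hm _.
    rewrite -[X in X <= _]mul1r; apply: ler_wpM2r => //.
    by rewrite invr_ge0; exact: ltW.
  apply: le_trans (_ : 1 - pr theta (fun r => forall t, t \in M -> ~~ sat r t) <= _).
    rewrite lerD2l lerN2; exact: (greedy_none th0 th1 par c0 s0).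
  rewrite -prC; apply: pr_mono => // r Hr.
  have [t tM st] : exists2 t, t \in M & sat r t.
    apply: contrapT => Hn; apply: Hr => t tM; apply/negP => st; apply: Hn.
    by exists t.
  exists (Leaf U true); split.
    by rewrite /=; apply: mulr_ge0; exact: ltW.
  move=> x /=; symmetry; apply/hasP; exists t; first exact: (greedy_sub tM).
  exact: sat_eval.
have mlam : m%:R * lam < ln p.
  move: Hm; rewrite -ltr_ln ?posrE ?invr_gt0 ?exprn_gt0 //; last by lra.
  rewrite lnV ?posrE // lnXn; last by lra.
  rewrite -mulr_natl /lam mulrN; lra.
set us := parsM par M.
set usset := [set u | u \in us].
set N := #|powerset usset|.
have N0 : (0 < N)%N by rewrite /N card_powerset expn_gt0.
set p' := p * N%:R.
have pp' : 0 < p' by rewrite mulr_gt0 // ltr0n.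
set B := [set v | par v \in us].
pose A := fun (a r : {ffun V -> option bool}) => forall S, S \in powerset usset ->
  exists T : DT U, (height T)%:R <= h' * ln p' /\
    forall x, evalDT T x = evalDNF (restr par us f0 a S) (phi par r x).
have cover : forall t, t \in f0 -> (t == [::]) || has (fun l => par l.1 \in us) t.
  by move=> t tf; apply: greedy_cover.
have HA : 1 - C' / p <= pr theta (fun r => A r r).
  apply: (cond_lb th0 th1 (B := B)).
  - move=> a a' r Ha; rewrite /A.
    by split => H S HS; [rewrite -(restr_dep_a f0 S Ha) | rewrite (restr_dep_a f0 S Ha)];
      apply: H.
  - move=> a r r' Hr; split => H S HS; have [T [hT eT]] := H S HS; exists T;
      split => // x; rewrite eT.
      by apply: restr_dep_r.
    by apply: restr_dep_r => v vB; symmetry; apply: Hr.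
  - move=> a.
    have := union_lb th0 th1 (P := mem (powerset usset))
      (E := fun S r => exists T : DT U, (height T)%:R <= h' * ln p' /\
         forall x, evalDT T x = evalDNF (restr par us f0 a S) (phi par r x))
      (e := C' / p') _.
      have -> : #|mem (powerset usset)|%:R * (C' / p') = C' / p.
        rewrite /p' -/N; field.
        by apply/andP; split; [rewrite gt_eqF | rewrite pnatr_eq0 -lt0n].
    apply => S _; apply: IH; last exact: pp'.
    exact: (restr_w a S cover fw0).
apply: le_trans HA _; apply: pr_mono => // r Hr.
have Hrho : forall rho : U -> bool, exists T : DT U, (height T)%:R <= h' * ln p' /\
    forall x, evalDT T x = evalDNF f0 (phi par r (ow us rho x)).
  move=> rho.
  have Sin : [set u in us | rho u] \in powerset usset.
    by rewrite powersetE; apply/fintype.subsetP => u; rewrite !inE => /andP [].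
  have [T [hT eT]] := Hr _ Sin; exists T; split => // x.
  by rewrite eT restr_eval.
have [T [hT eT]] := @dt_list R U us (fun x => evalDNF f0 (phi par r x)) (h' * ln p') Hrho.
  exists T; split => //; apply: le_trans hT _.
  have sM : all (fun t => size t <= w.+1)%N M.
    by apply/allP => t tM; exact: (allP s0 t (greedy_sub tM)).
  have s1 : (size us <= w.+1 * m)%N := size_parsM par sM.
  have s1R : (size us)%:R <= W * m%:R by rewrite -natrM ler_nat.
  have lnN : ln (N%:R : R) <= W * m%:R * L2.
    have -> : ln (N%:R : R) = #|usset|%:R * L2.
      rewrite /N card_powerset natrX lnXn ?ltr0n // mulr_natl.
      by congr (ln _ *+ _).
    apply: ler_wpM2r => //; apply: le_trans s1R.
    rewrite ler_nat /usset cardsE; exact: card_size.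
  have lnp' : ln p' = ln p + ln N%:R by rewrite lnM ?posrE ?ltr0n.
  have mX : m%:R <= ln p / lam by rewrite ler_pdivlMr //; exact: ltW mlam.
  have -> : h * ln p = W * (ln p / lam) + h' * ln p + h' * (W * (ln p / lam) * L2).
    rewrite /h; field; lra.
  have e1 : W * m%:R <= W * (ln p / lam) by apply: ler_wpM2l => //; exact: ltW.
  have e2 : h' * (W * m%:R * L2) <= h' * (W * (ln p / lam) * L2).
    by apply: ler_wpM2l; [exact: ltW | apply: ler_wpM2r].
  have e3 : h' * ln N%:R <= h' * (W * m%:R * L2) by apply: ler_wpM2l => //; exact: ltW.
  rewrite lnp' mulrDr; lra.
Qed.

End Main.
Lemma main_ind (R : realType) (theta : R) : 0 <= theta -> theta < 1 ->
  forall w, exists h C : R, 0 < h /\ 1 <= C /\ good theta w h C.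
Proof.
move=> t0 t1; elim=> [|w [h [C [h0 [C1 G]]]]].
  by exists 1, 1; split; [exact: ltr01 | split; [exact: lexx | exact: good0]].
have [h2 [h20 G2]] := good_step t0 t1 h0 C1 G.
by exists h2, C.
Qed.

Theorem mainTheorem17 (R : realType) (k : nat) (theta : R) (w : nat) :
  (2 <= k)%N -> 0 <= theta -> theta < 1 -> (0 < w)%N ->
  exists h : R, 0 < h /\
  exists C : R,
    forall (d d' : nat), (1 <= d')%N -> (d' <= d)%N ->
    forall f : DNF (L k d'), is_wDNF w f ->
    forall p : R, 0 < p ->
      1 - C / p <=
      prob theta (fun r : {ffun L k d' -> option bool} =>
        exists T : DT (L k d'.-1),
          ((height T)%:R <= h * ln p) /\
          forall x : {ffun L k d'.-1 -> bool},
            evalDT T x = evalDNF f (Phi r x)).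
Proof.
move=> k2 t0 t1 w0.
have [h [C [h0 [C1 G]]]] := main_ind t0 t1 w.
exists h; split => //; exists C => d d' d1 dd f fw p pp.
have HH : forall E : {ffun L k d' -> option bool} -> Prop, prob theta E = pr theta E.
  by [].
rewrite HH; apply: le_trans (G (L k d') (L k d'.-1) (@parent k d') f fw p pp) _.
apply: pr_mono => // r [T [hT eT]]; exists T; split => // x; rewrite eT.
by congr evalDNF; apply: funext => v; rewrite /Phi ffunE /phi.
Qed.
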